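(* Let $G$ be a finite transitive permutation group with point stabiliser $H$, let $p$ be a prime, let $S$ be a Sylow $p$-subgroup of $H$, and let $x\in H$ have order a power of $p$. (i) If $|S^G|>|S^H|^2-|S^H|+1$, then $G$ has a subdegree divisible by $p$. (ii) If $|x^G|>|x^G\cap H|^2-|x^G\cap H|+1$, then $G$ has a subdegree divisible by $p$.
   Context: $S^G$ denotes the set of $G$-conjugates of $S$ (similarly $S^H$, $x^G$). A subdegree is the size of an orbit of a point stabiliser. *)

(* Defs.v *)
From mathcomp Require Import all_boot all_fingroup all_solvable.
Set Implicit Arguments.
Unset Strict Implicit.
Unset Printing Implicit Defensive.

(* Main.v *)
Require Import Defs.
From mathcomp Require Import all_boot all_fingroup all_solvable.
From mathcomp Require Import all_algebra ring zify.
Set Implicit Arguments.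
Unset Strict Implicit.
Unset Printing Implicit Defensive.

Lemma card_cond (V : finType) (A : {pred V}) (Q : pred V) :
  #|[set y in A | Q y]| = \sum_(y in A) Q y.
Proof.
rewrite -sum1_card big_mkcond /= [RHS]big_mkcond /=.
apply: eq_bigr => y _; rewrite !inE; by case: (y \in A); case: (Q y).
Qed.

Lemma cs_nat (V : finType) (A : {pred V}) (l : V -> nat) :
  (\sum_(y in A) l y) ^ 2 <= #|A| * \sum_(y in A) l y ^ 2.
Proof.
have Hsq : (\sum_(y in A) l y) ^ 2 = \sum_(i in A) \sum_(j in A) l i * l j.
  rewrite expnS expn1 big_distrl /=; apply: eq_bigr => i _.
  by rewrite big_distrr.
have H1 : 2 * (\sum_(y in A) l y) ^ 2 =
   \sum_(i in A) \sum_(j in A) 2 * (l i * l j).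
  rewrite Hsq big_distrr /=; apply: eq_bigr => i _; by rewrite big_distrr.
have H2 : 2 * (#|A| * \sum_(y in A) l y ^ 2) =
   \sum_(i in A) \sum_(j in A) (l i ^ 2 + l j ^ 2).
  have E : forall i, \sum_(j in A) (l i ^ 2 + l j ^ 2) = #|A| * l i ^ 2 + \sum_(y in A) l y ^ 2.
    move=> i; rewrite big_split /= -sum1_card big_distrl /=; congr (_ + _).
    by apply: eq_bigr => j _; rewrite mul1n.
  rewrite (eq_bigr _ (fun i _ => E i)) big_split /= -big_distrr /= sum_nat_const.
  by rewrite mul2n -addnn mulnC.
have : 2 * (\sum_(y in A) l y) ^ 2 <= 2 * (#|A| * \sum_(y in A) l y ^ 2).
  rewrite H1 H2; apply: leq_sum => i _; apply: leq_sum => j _; exact: (nat_Cauchy (l i) (l j)).1.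
by rewrite leq_pmul2l.
Qed.

Lemma arith (k d w e S Q : nat) : 0 < d -> Q + e * d <= d * d * k -> S ^ 2 <= w * Q ->
  e * k = (1 + w) * d -> d + S = d * k -> 1 + w <= k ^ 2 - k + 1.
Proof.
move=> d0 H1 G2 E1 E2.
have k1 : 1 <= k.
  case: k E2 {H1 E1} => // ; rewrite muln0; lia.
have SE : S = d * (k - 1).
  rewrite mulnBr muln1; lia.
have H2 := leq_mul (leqnn (k * w)) H1.
have H3 : k * S ^ 2 <= k * (w * Q) by rewrite leq_mul2l G2 orbT.
have e1 : k * w * (Q + e * d) = k * (w * Q) + (e * k) * d * w by ring.
rewrite e1 E1 in H2.
rewrite SE in H3.
have H4 : d * d * (k * (k - 1) ^ 2 + (1 + w) * w) <= d * d * (k * k * w).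
  have e2 : d * d * (k * (k - 1) ^ 2 + (1 + w) * w) = k * (d * (k - 1)) ^ 2 + (1 + w) * d * d * w by ring.
  have e3 : d * d * (k * k * w) = k * w * (d * d * k) by ring.
  rewrite e2 e3; apply: leq_trans H2; rewrite leq_add2r; exact: H3.
rewrite leq_pmul2l ?muln_gt0 ?d0 // in H4.
move: H4; set j := k - 1; have -> : k = j + 1 by rewrite /j; lia.
move=> H4.
have e4 : (j + 1) ^ 2 = j * j + 2 * j + 1 by ring.
rewrite e4 leqNgt; apply/negP => hw.
have hw' : w = j * j + j + 1 + (w - (j * j + j + 1)) by lia.
move: H4; rewrite hw'; set t := w - _ => H4.
have e5 : (j + 1) * j ^ 2 + (1 + (j * j + j + 1 + t)) * (j * j + j + 1 + t) =
   (j + 1) * (j + 1) * (j * j + j + 1 + t) + (1 + t) * (j * j + 1 + t) by ring.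
rewrite e5 in H4.
have : 0 < (1 + t) * (j * j + 1 + t) by rewrite muln_gt0; apply/andP; split; lia.
lia.
Qed.

Lemma furedi (V B : finType) (P : V -> B -> bool) (Sg : {set V}) (x : V) (k d : nat) :
  x \in Sg -> 0 < d ->
  (forall b, #|[set y in Sg | P y b]| = k) ->
  (forall y, y \in Sg -> #|[set b | P y b]| = d) ->
  (forall b c, exists y, [&& y \in Sg, P y b & P y c]) ->
  #|Sg| <= k ^ 2 - k + 1.
Proof.
move=> xS d0 hk hd hint.
have hk' b : \sum_(y in Sg) P y b = k by rewrite -card_cond hk.
have hd' y : y \in Sg -> \sum_b P y b = d.
  by move=> yS; rewrite -(hd y yS) -card_cond; apply: eq_card => b; rewrite !inE.
pose lam y := \sum_b (P x b && P y b).
pose v := #|Sg|. pose e := #|B|.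
have E1 : e * k = v * d.
  have : \sum_(b : B) \sum_(y in Sg) (P y b : nat) = \sum_(y in Sg) \sum_b (P y b : nat).
    by rewrite exchange_big.
  rewrite (eq_bigr _ (fun b _ => hk' b)) sum_nat_const.
  rewrite (eq_bigr _ (fun y yS => hd' y yS)) sum_nat_const.
  by rewrite /e /v => ->.
have E2 : \sum_(y in Sg) lam y = d * k.
  rewrite /lam exchange_big /= -(hd' x xS) big_distrl /=.
  apply: eq_bigr => b _; rewrite -(hk' b) big_distrr /=.
  by apply: eq_bigr => y _; rewrite mulnb.
have Ed : \sum_b (P x b : nat) = d by rewrite hd'.
have lamx : lam x = d by rewrite /lam -Ed; apply: eq_bigr => b _; rewrite andbb.
have lamE y : \sum_(b | P x b) (P y b : nat) = lam y.
  by rewrite /lam big_mkcond /=; apply: eq_bigr => b _; case: (P x b).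
have E3 : \sum_b \sum_(y in Sg) P y b * lam y = d * (d * k).
  rewrite exchange_big /= -E2 big_distrr /=; apply: eq_bigr => y yS.
  by rewrite -big_distrl /= hd'.
have F1 : \sum_(b | P x b) \sum_(y in Sg) P y b * lam y = \sum_(y in Sg) lam y ^ 2.
  rewrite exchange_big /=; apply: eq_bigr => y _.
  by rewrite -big_distrl /= lamE expnS expn1.
have F2 : forall b, d <= \sum_(y in Sg) P y b * lam y.
  move=> b.
  have -> : \sum_(y in Sg) P y b * lam y = \sum_c P x c * \sum_(y in Sg) (P y b && P y c).
    rewrite /lam; under eq_bigr => y _ do rewrite big_distrr /=.
    rewrite exchange_big /=; apply: eq_bigr => c _.
    rewrite big_distrr /=; apply: eq_bigr => y _.
    by case: (P x c); case: (P y b); case: (P y c).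
  rewrite -{1}Ed; apply: leq_sum => c _.
  case: (P x c) => //=; rewrite mul1n.
  have [y /and3P [yS Pb Pc]] := hint b c.
  by rewrite (bigD1 y) //= Pb Pc.
have F3 : \sum_(b | ~~ P x b) d <= \sum_(b | ~~ P x b) \sum_(y in Sg) P y b * lam y.
  by apply: leq_sum => b _; apply: F2.
have F4 : \sum_(b | P x b) d = d * d.
  rewrite big_mkcond /= (eq_bigr (fun b => P x b * d)); first by rewrite -big_distrl /= Ed.
  by move=> b _; case: (P x b); rewrite ?mul1n.
have F5 : \sum_(b | P x b) d + \sum_(b | ~~ P x b) d = e * d.
  have -> : e * d = \sum_(b : B) d.
    rewrite /e. rewrite -sum_nat_const. apply: eq_bigl => b. by rewrite inE.
  by rewrite [RHS](bigID (fun b => P x b)).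
have G1 : \sum_(y in Sg) lam y ^ 2 + e * d <= d * (d * k) + d * d.
  move: E3; rewrite (bigID (fun b => P x b)) /= F1 => E3.
  move: F3 F4 F5 E3; lia.
have G2 := cs_nat (mem (Sg :\ x)) lam.
rewrite (big_setD1 x xS) /= lamx in G1.
rewrite (big_setD1 x xS) /= lamx in E2.
set Q := \sum_(i in Sg :\ x) lam i ^ 2 in G1 G2.
set S := \sum_(i in Sg :\ x) lam i in E2 G2.
have v1 : 1 + #|Sg :\ x| = v by rewrite /v [#|Sg|](cardsD1 x) xS.
set w := #|Sg :\ x| in G2 v1.
rewrite -/v -v1; rewrite -v1 in E1.
apply: (arith d0 _ G2 E1 E2).
move: G1; rewrite mulnA (expnS d 1) expn1; lia.
Qed.

Local Open Scope group_scope.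

Lemma fixJ (T : finType) (R : {set {perm T}}) (g : {perm T}) :
  [set b | R :^ g \subset 'C[b | 'P]] = [set 'P%act b g | b in [set b | R \subset 'C[b | 'P]]].
Proof.
apply/setP => b; rewrite inE -{1}(actKV 'P g b) astab1_act conjSg.
by rewrite -[in RHS](actKV 'P g b) (mem_imset _ _ (act_inj 'P g)) inE.
Qed.

Lemma card_fixJ (T : finType) (R : {set {perm T}}) (g : {perm T}) :
  #|[set b | R :^ g \subset 'C[b | 'P]]| = #|[set b | R \subset 'C[b | 'P]]|.
Proof. by rewrite fixJ card_imset //; apply: act_inj. Qed.

Lemma transP (T : finType) (G : {group {perm T}}) (a b : T) :
  [transitive G, on [set: T] | 'P] -> exists2 g, g \in G & b = 'P%act a g.
Proof.
move=> htr; have : b \in orbit 'P G a by rewrite (atransP htr) ?inE.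
by case/orbitP => g gG <-; exists g.
Qed.

Lemma fixpt (T : finType) (G : {group {perm T}}) (a : T) (p : nat) (A : {group {perm T}}) (c : T) :
  ~~ (p %| #|orbit 'P 'C_G[a | 'P] c|) ->
  A \subset 'C_G[a | 'P] -> p.-group A ->
  exists2 h, h \in 'C_G[a | 'P] & A \subset 'C['P%act c h | 'P].
Proof.
move=> nd sAH pA.
have actsA : [acts A, on orbit 'P 'C_G[a | 'P] c | 'P].
  apply: subset_trans sAH _; exact: (acts_orbit 'P c (subsetT _)).
have hm := pgroup_fix_mod pA actsA.
case: (set_0Vmem 'Fix_(orbit 'P 'C_G[a | 'P] c | 'P)(A)) => [F0 | [d]].
  by move: nd; rewrite /dvdn hm F0 cards0 mod0n eqxx.
rewrite inE => /andP [/orbitP [h hH <-] dF].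
by exists h => //; rewrite sub_astab1.
Qed.

Lemma part2 (T : finType) (G : {group {perm T}}) (a : T) (p : nat) (x : {perm T}) :
  [transitive G, on [set: T] | 'P] ->
  (forall b, ~~ (p %| #|orbit 'P 'C_G[a | 'P] b|)) ->
  x \in 'C_G[a | 'P] -> p.-elt x ->
  #|x ^: G| <= #|x ^: G :&: 'C_G[a | 'P]| ^ 2 - #|x ^: G :&: 'C_G[a | 'P]| + 1.
Proof.
move=> htr nd xH px.
have xG : x \in G by case/setIP: xH.
have xCa : x \in 'C[a | 'P] by case/setIP: xH.
apply: (@furedi _ _ (fun y b => y \in 'C[b | 'P]) _ x _ #|[set b | [set x] \subset 'C[b | 'P]]|).
- exact: class_refl.
- by apply/card_gt0P; exists a; rewrite inE sub1set.
- move=> b; have [g gG ->] := transP a b htr.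
  rewrite -(cardJg (x ^: G :&: 'C_G[a | 'P]) g); apply: eq_card => y.
  rewrite in_set astab1_act [in LHS]mem_conjg mem_conjg -{1}(classGidr x gG) mem_conjg.
  rewrite (in_setI _ (x ^: G)); case: (y ^ g^-1 \in x ^: G) / idP => //= yG.
  have yG' : y ^ g^-1 \in G by apply: (subsetP (class_subG xG (subxx G))).
  by rewrite (in_setI _ G) yG'.
- move=> y /imsetP [g gG ->].
  rewrite -(card_fixJ _ g) conjg_set1; apply: eq_card => b.
  by rewrite [in RHS]in_set sub1set in_set.
- move=> b c; have [g gG ->] := transP a b htr.
  have sxH : <[x]> \subset 'C_G[a | 'P] by rewrite cycle_subG.
  have [h hH sx] := fixpt (nd ('P%act c g^-1)) sxH px.
  have hG : h \in G by case/setIP: hH.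
  have hCa : h \in 'C[a | 'P] by case/setIP: hH.
  exists (x ^ (h^-1 * g)); apply/and3P; split.
  - by apply: memJ_class; rewrite groupM ?groupV.
  - by rewrite astab1_act mem_conjg conjgM conjgK groupJ ?groupV.
  - rewrite -{1}(actKV 'P g c) astab1_act mem_conjg conjgM conjgK.
    rewrite astab1_act cycle_subG mem_conjg in sx; exact: sx.
Qed.

Lemma conjs_mem (T : finType) (G : {group {perm T}}) (S R : {set {perm T}}) g :
  g \in G -> (R :^ g \in S :^: G) = (R \in S :^: G).
Proof.
move=> gG; apply/imsetP/imsetP => [[u uG e] | [u uG ->]].
  exists (u * g^-1); first by rewrite groupM ?groupV.
  by rewrite conjsgM -e conjsgK.
by exists (u * g); rewrite ?groupM // conjsgM.
Qed.

Lemma part1 (T : finType) (G : {group {perm T}}) (a : T) (p : nat) (S : {group {perm T}}) :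
  [transitive G, on [set: T] | 'P] ->
  (forall b, ~~ (p %| #|orbit 'P 'C_G[a | 'P] b|)) ->
  S \in 'Syl_p('C_G[a | 'P]) ->
  #|S :^: G| <= #|S :^: 'C_G[a | 'P]| ^ 2 - #|S :^: 'C_G[a | 'P]| + 1.
Proof.
move=> htr nd; rewrite inE => sylS.
have sSH : S \subset 'C_G[a | 'P] by case/pHallP: sylS.
have sSG : S \subset G := subset_trans sSH (subsetIl _ _).
have sSCa : S \subset 'C[a | 'P] := subset_trans sSH (subsetIr _ _).
refine (@furedi _ _ (fun (R : {set {perm T}}) (b : T) => R \subset 'C[b | 'P]) (S :^: G) (S : {set _}) _ #|[set b | S \subset 'C[b | 'P]]| _ _ _ _ _).
- by apply/imsetP; exists 1; rewrite ?group1 ?conjsg1.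
- by apply/card_gt0P; exists a; rewrite inE.
- move=> b; have [g gG ->] := transP a b htr.
  have E1 : [set R in S :^: G | R \subset 'C['P%act a g | 'P]] =
            (conjugate^~ g) @: [set R in S :^: G | R \subset 'C[a | 'P]].
    apply/setP => R; rewrite -{2}(conjsgKV g R) (mem_imset _ _ (@conjsg_inj _ g)).
    rewrite !in_set astab1_act -sub_conjgV.
    by rewrite -{1}(conjsgKV g R) (conjs_mem _ _ gG).
  have E2 : [set R in S :^: G | R \subset 'C[a | 'P]] = S :^: 'C_G[a | 'P].
    apply/setP => R; rewrite in_set; apply/andP/imsetP => [[/imsetP [u uG ->] sR] | [h hH ->]].
      have sRH : S :^ u \subset 'C_G[a | 'P].
        by rewrite subsetI sR -(conjGid uG) conjSg sSG.
      have sylR : p.-Sylow('C_G[a | 'P]) (S :^ u)%G.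
        apply/pHallP; split => //=; rewrite cardJg; by case/pHallP: sylS.
      have [h hH e] := Sylow_trans sylS sylR.
      by exists h.
    have hG : h \in G by case/setIP: hH.
    have hCa : h \in 'C[a | 'P] by case/setIP: hH.
    split; first by apply/imsetP; exists h.
    by rewrite -(conjGid hCa) conjSg.
  rewrite E1 card_imset; last exact: conjsg_inj.
  by rewrite E2.
- by move=> R /imsetP [g gG ->]; rewrite card_fixJ.
- move=> b c; have [g gG ->] := transP a b htr.
  have [h hH sx] := fixpt (nd ('P%act c g^-1)) sSH (pHall_pgroup sylS).
  have hG : h \in G by case/setIP: hH.
  have hCa : h \in 'C[a | 'P] by case/setIP: hH.
  exists (S :^ (h^-1 * g)); apply/and3P; split.
  - by apply/imsetP; exists (h^-1 * g); rewrite ?groupM ?groupV.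
  - by rewrite astab1_act conjsgM conjSg sub_conjgV (conjGid hCa).
  - rewrite -{1}(actKV 'P g c) astab1_act conjsgM conjSg sub_conjgV -astab1_act.
    exact: sx.
Qed.

Theorem lemma2p6 (T : finType) (G : {group {perm T}}) (a : T) (p : nat) :
  [transitive G, on [set: T] | 'P] ->
  prime p ->
  let H := 'C_G[a | 'P] in
  (forall S : {group {perm T}}, S \in 'Syl_p(H) ->
     #|S :^: H| ^ 2 - #|S :^: H| + 1 < #|S :^: G| ->
     exists b : T, p %| #|orbit 'P H b|) /\
  (forall x : {perm T}, x \in H -> p.-elt x ->
     #|x ^: G :&: H| ^ 2 - #|x ^: G :&: H| + 1 < #|x ^: G| ->
     exists b : T, p %| #|orbit 'P H b|).
Proof.
move=> htr pr H; split.
- move=> S sylS hyp.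
  case: (boolP [exists b, p %| #|orbit 'P H b|]) => [/existsP [b hb] | /existsPn nd].
    by exists b.
  by have := part1 htr nd sylS; rewrite leqNgt hyp.
- move=> x xH px hyp.
  case: (boolP [exists b, p %| #|orbit 'P H b|]) => [/existsP [b hb] | /existsPn nd].
    by exists b.
  by have := part2 htr nd xH px; rewrite leqNgt hyp.
Qed.
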